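(* Let $P,Q$ be probability measures on $\mathbb{R}^d$ with $P\ll Q$ and $Q\ll P$, and let $\alpha\in\mathbb{R}\setminus\{0,1\}$. Then $$D_{\alpha}(Q\|P)=\sup_{T:\mathbb{R}^d\to\mathbb{R}}\Big\{\frac{1}{\alpha(1-\alpha)}-\frac{1}{\alpha}E_Q\big[e^{\alpha T}\big]-\frac{1}{1-\alpha}E_P\big[e^{(\alpha-1)T}\big]\Big\},$$ where the supremum is over all measurable $T:\mathbb{R}^d\to\mathbb{R}$ with $E_P[e^{(\alpha-1)T}]<\infty$ and $E_Q[e^{\alpha T}]<\infty$. Equality (attainment of the supremum) holds for $T^*$ satisfying $\frac{dQ}{dP}=e^{-T^*}$.
   Context: The $\alpha$-divergence is $D_{\alpha}(Q\|P)=E_P\Big[\frac{1}{\alpha(\alpha-1)}\Big\{\big(\frac{dQ}{dP}\big)^{1-\alpha}-1\Big\}\Big]$ for $\alpha\in\mathbb{R}\setminus\{0,1\}$. *)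

(* Defs.v *)
From HB Require Import structures.
From mathcomp Require Import all_boot all_order all_algebra.
From mathcomp Require Import all_classical all_reals all_analysis.
Set Implicit Arguments. Unset Strict Implicit. Unset Printing Implicit Defensive.
Import Order.TTheory GRing.Theory Num.Theory.
Local Open Scope classical_set_scope.
Local Open Scope ring_scope.
Local Open Scope charge_scope.

(* R^d is modelled as [d.-tuple R] with its
   canonical product (coordinate-generated) sigma-algebra over the Borel sets of R. *)

Definition rn_deriv (R : realType) (d : nat)
    (Q P : probability (d.-tuple R) R) : d.-tuple R -> \bar R :=
  ('d (charge_of_finite_measure Q) '/d P). 

Definition alpha_div (R : realType) (d : nat) (alpha : R)
    (Q P : probability (d.-tuple R) R) : \bar R :=
  (\int[P]_x (((fine (rn_deriv Q P x)) `^ (1 - alpha) - 1)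
                 / (alpha * (alpha - 1)))%:E)%E.

Definition admissible (R : realType) (d : nat) (alpha : R)
    (Q P : probability (d.-tuple R) R) (T : d.-tuple R -> R) : Prop :=
  [/\ measurable_fun [set: d.-tuple R] T,
      (\int[P]_x (expR ((alpha - 1) * T x))%:E < +oo)%E &
      (\int[Q]_x (expR (alpha * T x))%:E < +oo)%E].

Definition alpha_objective (R : realType) (d : nat) (alpha : R)
    (Q P : probability (d.-tuple R) R) (T : d.-tuple R -> R) : \bar R :=
  ((alpha * (1 - alpha))^-1%:E
   - alpha^-1%:E * \int[Q]_x (expR (alpha * T x))%:E
   - (1 - alpha)^-1%:E * \int[P]_x (expR ((alpha - 1) * T x))%:E)%E.

(* Main.v *)
Require Import Defs.
From HB Require Import structures.
From mathcomp Require Import all_boot all_order all_algebra.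
From mathcomp Require Import all_classical all_reals all_analysis.
From mathcomp Require Import measurable_realfun ring lra.
Import Order.TTheory GRing.Theory Num.Theory.
Local Open Scope classical_set_scope.
Local Open Scope ring_scope.

Section real_part.
Context (R : realType) (a : R).
Hypotheses (a0 : a != 0) (a1 : a != 1).

Lemma keyE (u : R) :
  0 <= ((a - 1) * expR (a * u) - a * expR ((a - 1) * u) + 1) / (a * (a - 1)).
Proof.
have am1 : a - 1 != 0 by rewrite subr_eq0.
have [alt0|age0] := ltP a 0.
  have hv := expR_gt0 (a * u).
  have hz : expR ((a - 1) * u) = expR (a * u) * expR (- u).
    by rewrite -expRD; congr expR; ring.
  have h1 := expR_ge1Dx (- u).
  have h2 := expR_ge1Dx (- (a * u)).
  have h2' : 1 >= expR (a * u) * (1 - a * u).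
    have : expR (a * u) * expR (- (a * u)) = 1 by rewrite -expRD subrr expR0.
    move=> e; rewrite -[in leRHS]e ler_pM2l //; lra.
  apply: divr_ge0; last by nra.
  rewrite hz.
  have h3 : 0 <= (- a * expR (a * u)) * (expR (- u) - (1 - u)).
    apply: mulr_ge0; [nra|lra].
  nra.
have [agt1|ale1] := ltP 1 a.
  have hv := expR_gt0 ((a - 1) * u).
  have hz : expR (a * u) = expR ((a - 1) * u) * expR u.
    by rewrite -expRD; congr expR; ring.
  have h1 := expR_ge1Dx u.
  have h2' : 1 >= expR ((a - 1) * u) * (1 - (a - 1) * u).
    have : expR ((a - 1) * u) * expR (- ((a - 1) * u)) = 1 by rewrite -expRD subrr expR0.
    move=> e; rewrite -[in leRHS]e ler_pM2l //.
    have := expR_ge1Dx (- ((a - 1) * u)); lra.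
  apply: divr_ge0; last by nra.
  rewrite hz.
  have h3 : 0 <= ((a - 1) * expR ((a - 1) * u)) * (expR u - (1 + u)).
    apply: mulr_ge0; [nra|lra].
  nra.
have a0' : 0 < a by rewrite lt_neqAle eq_sym a0 age0.
have a1' : a < 1 by rewrite lt_neqAle a1 ale1.
have h1 := expR_ge1Dx ((a - 1) * u).
have h2 := expR_ge1Dx (a * u).
have -> : ((a - 1) * expR (a * u) - a * expR ((a - 1) * u) + 1) / (a * (a - 1))
  = (a * expR ((a - 1) * u) + (1 - a) * expR (a * u) - 1) / (a * (1 - a)).
  by field; rewrite a0 am1 andbT subr_eq0 eq_sym a1.
apply: divr_ge0; last by nra.
nra.
Qed.


Definition fdiv (y : R) := (y `^ (1 - a) - 1) / (a * (a - 1)).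
Definition kk (y t : R) := (a * (1 - a))^-1 - a^-1 * (y * expR (a * t))
   - (1 - a)^-1 * expR ((a - 1) * t).

Let aux (y t : R) : 0 < y ->
  [/\ y `^ (1 - a) = expR ((1 - a) * ln y),
      y * expR (a * t) = expR ((1 - a) * ln y) * expR (a * (ln y + t)) &
      expR ((a - 1) * t) = expR ((1 - a) * ln y) * expR ((a - 1) * (ln y + t))].
Proof.
move=> y0; have ey : y = expR (ln y) by rewrite lnK // posrE.
split.
- by rewrite /powR gt_eqF.
- by rewrite {1}ey -!expRD; congr expR; ring.
- by rewrite -expRD; congr expR; ring.
Qed.

Lemma kk_le y t : 0 < y -> kk y t <= fdiv y.
Proof.
move=> y0; have [p1 p2 p3] := aux y t y0.
have am1 : a - 1 != 0 by rewrite subr_eq0.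
have a1' : 1 - a != 0 by rewrite subr_eq0 eq_sym.
rewrite /kk /fdiv p1 p2 p3 -subr_ge0.
have := keyE (ln y + t); have A0 := expR_gt0 ((1 - a) * ln y).
set A := expR ((1 - a) * ln y); set B := expR (a * (ln y + t)).
set C := expR ((a - 1) * (ln y + t)).
move=> h.
have -> : (A - 1) / (a * (a - 1)) -
  ((a * (1 - a))^-1 - a^-1 * (A * B) - (1 - a)^-1 * (A * C))
  = A * (((a - 1) * B - a * C + 1) / (a * (a - 1))).
  by field; rewrite a0 am1 a1'.
by apply: mulr_ge0 => //; exact: ltW.
Qed.

Lemma kk_eq y : 0 < y -> kk y (- ln y) = fdiv y.
Proof.
move=> y0; have [p1 p2 p3] := aux y (- ln y) y0.
have am1 : a - 1 != 0 by rewrite subr_eq0.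
have a1' : 1 - a != 0 by rewrite subr_eq0 eq_sym.
rewrite /kk /fdiv p1 p2 p3 subrr !mulr0 expR0 !mulr1.
by field; rewrite a0 am1 a1'.
Qed.

End real_part.
Arguments fdiv {R}.
Arguments kk {R}.
Arguments kk_le {R a}.
Arguments kk_eq {R a}.

Section splitL.
Context dd (T : measurableType dd) (R : realType) (mu : {measure set T -> \bar R}).

Lemma splitL (f k : T -> R) : measurable_fun setT f ->
  mu.-integrable setT (EFin \o k) -> (forall x, k x <= f x) ->
  (\int[mu]_x (f x)%:E = \int[mu]_x (f x - k x)%:E + \int[mu]_x (k x)%:E)%E.
Proof.
move=> mf ik kf.
have mk : measurable_fun setT k.
  by have /integrableP[/measurable_EFinP] := ik.
have mfk : measurable_fun setT (fun x => f x - k x) by exact: measurable_funB.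
have kfin := integrable_fin_num measurableT ik.
have [fkfin|] := ltP (\int[mu]_x (f x - k x)%:E)%E +oo%E.
  have ifk : mu.-integrable setT (EFin \o (fun x => f x - k x)).
    apply/integrableP; split; first exact/measurable_EFinP.
    under eq_integral do rewrite /= ger0_norm ?subr_ge0 ?kf//.
    by [].
  rewrite -(integralD_EFin measurableT ifk ik).
  by apply: eq_integral => x _ /=; rewrite -EFinD subrK.
rewrite leye_eq => /eqP fkoo.
rewrite fkoo addye ?fin_num_ninfty//.
set F := (fun x => (f x)%:E).
have mF : measurable_fun setT F by exact/measurable_EFinP.
have hneg : (\int[mu]_x F^\- x < +oo)%E.
  apply: le_lt_trans (integral_funeneg_lt_pinfty measurableT ik).
  apply: ge0_le_integral => //.
  - exact: measurable_funeneg.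
  - exact/measurable_funeneg/measurable_EFinP.
  - move=> x _; rewrite !funenegE /= ge_max !le_max lexx !orbT andbT.
    by rewrite lee_fin lerN2 kf.
have hpos : (\int[mu]_x F^\+ x = +oo)%E.
  apply/eqP; rewrite eq_le leey /= leNgt; apply/negP => h.
  have /integrableP[_ hk] := ik.
  have : (\int[mu]_x (f x - k x)%:E <= \int[mu]_x (F^\+ x + (`|k x|)%:E))%E.
    apply: ge0_le_integral => //.
    - by move=> x _; rewrite lee_fin subr_ge0.
    - exact/measurable_EFinP.
    - apply: emeasurable_funD; first exact: measurable_funepos.
      exact/measurable_EFinP/measurableT_comp.
    - move=> x _; rewrite funeposE /=.
      rewrite /F -EFin_max -EFinD lee_fin.
      have := ler_norm (- k x); rewrite normrN.
      have : f x <= Num.max (f x) 0 by rewrite le_max lexx.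
      lra.
  rewrite ge0_integralD//.
  - by rewrite fkoo leye_eq lt_eqF// lte_add_pinfty.
  - exact: measurable_funepos.
  - exact/measurable_EFinP/measurableT_comp.
rewrite integralE hpos addye// eqe_oppLR /=.
  by rewrite lt_eqF.
by move: kfin; rewrite fin_numE => /andP[].
Qed.
End splitL.

Section helpers.
Context dd (T : measurableType dd) (R : realType) (mu : {measure set T -> \bar R}).

Lemma intB_EFin (f1 f2 : T -> R) : mu.-integrable setT (EFin \o f1) ->
  mu.-integrable setT (EFin \o f2) ->
  mu.-integrable setT (EFin \o (fun x => f1 x - f2 x)).
Proof.
move=> i1 i2; apply: (eq_integrable measurableT _ _ _ (integrableB measurableT i1 i2)).
by move=> x _ /=; rewrite EFinB.
Qed.

Lemma intZ_EFin (k : R) (f : T -> R) : mu.-integrable setT (EFin \o f) ->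
  mu.-integrable setT (EFin \o (fun x => k * f x)).
Proof.
move=> i; apply: (eq_integrable measurableT _ _ _ (integrableZl measurableT k i)).
by move=> x _ /=; rewrite EFinM.
Qed.

Lemma integralZ_EFin (k : R) (f : T -> R) : mu.-integrable setT (EFin \o f) ->
  (\int[mu]_x (k * f x)%:E = k%:E * \int[mu]_x (f x)%:E)%E.
Proof.
move=> i; rewrite -(integralZl measurableT i k).
by apply: eq_integral => x _; rewrite EFinM.
Qed.

End helpers.
Arguments intB_EFin {dd T R mu f1 f2}.
Arguments intZ_EFin {dd T R mu} k {f}.
Arguments integralZ_EFin {dd T R mu} k {f}.
Arguments splitL {dd T R mu}.


Section main.
Context (R : realType) (d : nat) (P Q : probability (d.-tuple R) R) (a : R).
Hypotheses (PQ : P `<< Q) (QP : Q `<< P) (a0 : a != 0) (a1 : a != 1).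
Local Notation X := (d.-tuple R).

Let QP' : charge_of_finite_measure Q `<< P := QP.
Let rn := rn_deriv Q P.
Let g x := fine (rn x).

Let rnE x : rn x = (g x)%:E.
Proof. by rewrite /g fineK // /rn /rn_deriv Radon_Nikodym_fin_num. Qed.

Let mrn : measurable_fun setT rn.
Proof. exact: measurable_int (Radon_Nikodym_integrable QP'). Qed.

Let mg : measurable_fun setT g.
Proof. exact: measurableT_comp. Qed.

Let G x := if 0 < g x then g x else 1.

Let Gpos x : 0 < G x.
Proof. by rewrite /G; case: ifPn. Qed.

Let mG : measurable_fun setT G.
Proof.
apply: measurable_fun_ifT => //.
exact: measurable_fun_ltr.
Qed.

Let ae_gpos : {ae P, forall x, 0 < g x}.
Proof.
pose N := [set x | g x <= 0].
have mN : measurable N.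
  have := mg measurableT _ (measurable_itv `]-oo, (0:R)]).
  by rewrite setTI; congr measurable; apply/seteqP; split => x /=;
    rewrite in_itv.
have QN : Q N = 0%E.
  apply/eqP; rewrite eq_le measure_ge0 andbT.
  rewrite -[Q N]/(charge_of_finite_measure Q N).
  rewrite (Radon_Nikodym_integral QP' mN).
  rewrite -[leRHS](integral0 P N); apply: le_integral => //.
  - exact: integrableS (Radon_Nikodym_integrable QP').
  - exact: integrable0.
  - by move=> x /set_mem Nx; have := rnE x; rewrite /rn /rn_deriv => ->; rewrite lee_fin.
have PN : P N = 0%E.
  exact: ((null_content_dominatesP P Q).1 PQ N mN QN).
exists N; split => // x /= /negP.
by rewrite -leNgt.
Qed.

Let ae_rnG : {ae P, forall x, rn x = (G x)%:E}.
Proof. by move: ae_gpos; apply: filterS => x gx; rewrite rnE /G gx. Qed.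

Let chg (phi : X -> R) : measurable_fun setT phi -> (forall x, 0 <= phi x) ->
  (\int[Q]_x (phi x)%:E < +oo)%E ->
  (\int[Q]_x (phi x)%:E = \int[P]_x (G x * phi x)%:E)%E /\
  P.-integrable setT (EFin \o (fun x => G x * phi x)).
Proof.
move=> mphi phi0 fin.
have iQ : Q.-integrable setT (EFin \o phi).
  apply/integrableP; split; first exact/measurable_EFinP.
  by under eq_integral do rewrite /= ger0_norm ?phi0//.
have mGphi : measurable_fun setT (fun x => G x * phi x) by exact: measurable_funM.
have e : (\int[Q]_x (phi x)%:E = \int[P]_x (G x * phi x)%:E)%E.
  rewrite -(Radon_Nikodym_change_of_variables QP measurableT iQ).
  apply: ae_eq_integral => //.
  - apply: emeasurable_funM => //; exact/measurable_EFinP.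
  - exact/measurable_EFinP.
  - move: ae_rnG; apply: filterS => x hx _.
    by rewrite /= -/(rn_deriv Q P x) -/(rn x) hx -EFinM mulrC.
split => //.
apply/integrableP; split; first exact/measurable_EFinP.
under eq_integral do rewrite /= ger0_norm ?mulr_ge0 ?phi0 ?(ltW (Gpos _))//.
by rewrite -e.
Qed.


Let div_eq : alpha_div a Q P = (\int[P]_x (fdiv a (G x))%:E)%E.
Proof.
rewrite /alpha_div; apply: ae_eq_integral => //.
- apply/measurable_EFinP; apply: measurable_funM => //.
  apply: measurable_funB => //.
  exact: (measurableT_comp (measurable_powR _)).
- apply/measurable_EFinP; apply: measurable_funM => //.
  apply: measurable_funB => //.
  exact: (measurableT_comp (measurable_powR _)).
- by move: ae_gpos; apply: filterS => x gx _; rewrite /fdiv /G gx.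
Qed.

Let obj_eq (T : X -> R) : admissible a Q P T ->
  alpha_objective a Q P T = (\int[P]_x (kk a (G x) (T x))%:E)%E /\
  P.-integrable setT (EFin \o (fun x => kk a (G x) (T x))).
Proof.
case=> mT hP hQ.
have mphi : measurable_fun setT (fun x => expR (a * T x)).
  apply: measurableT_comp; first exact: measurable_expR.
  exact: measurable_funM.
have mpsi : measurable_fun setT (fun x => expR ((a - 1) * T x)).
  apply: measurableT_comp; first exact: measurable_expR.
  exact: measurable_funM.
have [eQ iQ] := @chg _ mphi (fun x => ltW (expR_gt0 _)) hQ.
have iP : P.-integrable setT (EFin \o (fun x => expR ((a - 1) * T x))).
  apply/integrableP; split; first exact/measurable_EFinP.
  by under eq_integral do rewrite /= ger0_norm ?(ltW (expR_gt0 _))//.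
have ic : P.-integrable setT (EFin \o cst ((a * (1 - a))^-1)).
  exact: finite_measure_integrable_cst.
have i1 := intZ_EFin (a^-1) iQ.
have i2 := intZ_EFin ((1 - a)^-1) iP.
have i3 := intB_EFin ic i1.
have i4 := intB_EFin i3 i2.
split; last exact: i4.
rewrite /alpha_objective eQ.
rewrite (_ : (\int[P]_x (kk a (G x) (T x))%:E =
   \int[P]_x ((cst (a * (1 - a))^-1 x - a^-1 * (G x * expR (a * T x)))%:E
      - ((1 - a)^-1 * expR ((a - 1) * T x))%:E))%E); last first.
  by apply: eq_integral => x _; rewrite /kk EFinB.
rewrite (integralB_EFin measurableT i3 i2).
rewrite (_ : (\int[P]_x (cst (a * (1 - a))^-1 x - a^-1 * (G x * expR (a * T x)))%:E =
   \int[P]_x ((cst (a * (1 - a))^-1 x)%:E - (a^-1 * (G x * expR (a * T x)))%:E))%E); last first.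
  by apply: eq_integral => x _; rewrite EFinB.
rewrite (integralB_EFin measurableT ic i1).
rewrite (integralZ_EFin _ iQ) (integralZ_EFin _ iP).
congr (_ - _ - _)%E.
rewrite (eq_integral (cst ((a * (1 - a))^-1)%:E)); last by [].
rewrite integral_cst; last exact: measurableT.
by rewrite -[X in X = _]mule1; congr (_ * _)%E; exact/esym/probability_setT.
Qed.


Let mfdiv : measurable_fun setT (fun x => fdiv a (G x)).
Proof.
rewrite /fdiv; apply: measurable_funM; last exact: measurable_cst.
apply: measurable_funB; last exact: measurable_cst.
exact: (measurableT_comp (measurable_powR _) mG).
Qed.

Lemma part2 (Tstar : X -> R) : admissible a Q P Tstar ->
  {ae P, forall x, rn_deriv Q P x = (expR (- Tstar x))%:E} ->
  alpha_objective a Q P Tstar = alpha_div a Q P.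
Proof.
move=> adm ae.
have [-> iT] := @obj_eq _ adm; rewrite div_eq.
apply: (ae_eq_integral _ _ measurableT).
- exact: measurable_int iT.
- exact/measurable_EFinP.
- move: ae ae_rnG; apply: filterS2 => x h1 h2 _.
  have e : G x = expR (- Tstar x).
    by move: h1; rewrite -/(rn x) h2 => -[].
  have -> : Tstar x = - ln (G x) by rewrite e expRK opprK.
  by rewrite /= (kk_eq a0 a1 (G x) (Gpos x)).
Qed.

Let adm_bdd (T : X -> R) (M : R) : measurable_fun setT T ->
  (forall x, `|T x| <= M) -> admissible a Q P T.
Proof.
move=> mT TM.
have H (mu : probability X R) c : (\int[mu]_x (expR (c * T x))%:E < +oo)%E.
  apply: (@le_lt_trans _ _ (\int[mu]_x (expR (`|c| * M))%:E)%E).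
    apply: ge0_le_integral.
    - exact: measurableT.
    - by move=> x _; rewrite lee_fin ltW // expR_gt0.
    - apply/measurable_EFinP; apply: measurableT_comp; first exact: measurable_expR.
      exact: measurable_funM.
    - exact: measurable_cst.
    - move=> x _; rewrite lee_fin ler_expR.
      apply: le_trans (ler_norm _) _; rewrite normrM.
      by apply: ler_wpM2l; [exact: normr_ge0|exact: TM].
  rewrite (eq_integral (cst (expR (`|c| * M))%:E)); last by [].
  rewrite integral_cst; last exact: measurableT.
  rewrite [X in (_ * X)%E](_ : _ = 1%E); last exact: probability_setT.
  by rewrite mule1 ltry.
split; [exact: mT|exact: H|exact: H].
Qed.


Lemma part1 : alpha_div a Q P =
  ereal_sup [set alpha_objective a Q P T | T in admissible a Q P].
Proof.
rewrite div_eq.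
set S := ereal_sup _.
apply/eqP; rewrite eq_le; apply/andP; split; last first.
  apply: ge_ereal_sup => _ [T adm <-].
  have [-> iT] := @obj_eq _ adm.
  have hle x : kk a (G x) (T x) <= fdiv a (G x).
    exact: (kk_le a0 a1 (G x) (T x) (Gpos x)).
  rewrite (splitL (fun x => fdiv a (G x)) (fun x => kk a (G x) (T x)) mfdiv iT hle).
  apply: leeDr; apply: integral_ge0 => x _.
  by rewrite lee_fin subr_ge0.
pose Tn (n : nat) x := if `|ln (G x)| <= n%:R then - ln (G x) else 0.
have mTn n : measurable_fun setT (Tn n).
  apply: measurable_fun_ifT.
  - apply: (measurable_fun_ler (f := fun x => `|ln (G x)|) (g := cst n%:R)).
      apply: measurableT_comp; first exact: normr_measurable.
      by apply: measurableT_comp; [exact: measurable_ln|exact: mG].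
    exact: measurable_cst.
  - apply: measurable_funN.
    by apply: measurableT_comp; [exact: measurable_ln|exact: mG].
  - exact: measurable_cst.
have bTn n x : `|Tn n x| <= n%:R.
  by rewrite /Tn; case: ifP => h; [rewrite normrN|rewrite normr0].
have admn n := @adm_bdd (Tn n) n%:R (mTn n) (bTn n).
have adm0 : admissible a Q P (fun _ => 0).
  by apply: (@adm_bdd _ 0 (measurable_cst _)) => x; rewrite normr0.
have [_ i0] := @obj_eq _ adm0.
pose k0 x := kk a (G x) 0.
have hk0 x : k0 x <= fdiv a (G x) := kk_le a0 a1 (G x) 0 (Gpos x).
pose u n x := kk a (G x) (Tn n x).
have iu n : P.-integrable setT (EFin \o u n) := (@obj_eq _ (admn n)).2.
have mu n : measurable_fun setT (u n).
  by have /integrableP[/measurable_EFinP] := iu n.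
have mk0 : measurable_fun setT k0.
  by have /integrableP[/measurable_EFinP] := i0.
have un_ge n x : k0 x <= u n x.
  by rewrite /u /Tn; case: ifP => _; [rewrite kk_eq|].
have un_nd x : nondecreasing_seq (fun n => ((u n x - k0 x)%:E)).
  move=> n m nm; rewrite lee_fin lerD2r /u /Tn.
  case: ifP => hn.
    have -> : `|ln (G x)| <= m%:R.
      by apply: le_trans hn _; rewrite ler_nat.
    by [].
  by case: ifP => _ //; rewrite kk_eq //; exact: hk0.
have un_lim x : limn (fun n => ((u n x - k0 x)%:E)) = (fdiv a (G x) - k0 x)%:E.
  apply: lim_near_cst => //.
  near=> n.
  rewrite /u /Tn ifT ?kk_eq //.
  by near: n; exact: nbhs_infty_ger.
have mc : (\int[P]_x ((fdiv a (G x) - k0 x)%:E) =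
           limn (fun n => \int[P]_x ((u n x - k0 x)%:E)))%E.
  rewrite -(@monotone_convergence _ _ _ P setT measurableT
              (fun n x => (u n x - k0 x)%:E)).
  - by apply: eq_integral => x _; rewrite un_lim.
  - by move=> n; apply/measurable_EFinP; apply: measurable_funB.
  - by move=> n x _; rewrite lee_fin subr_ge0.
  - by move=> x _; exact: un_nd.
have ule n : (\int[P]_x ((u n x - k0 x)%:E) <= S - \int[P]_x (k0 x)%:E)%E.
  rewrite (_ : \int[P]_x ((u n x - k0 x)%:E) =
     \int[P]_x ((u n x)%:E - (k0 x)%:E))%E; last first.
    by apply: eq_integral => x _; rewrite EFinB.
  rewrite (integralB_EFin measurableT (iu n) i0).
  apply: leeB => //.
  rewrite -(@obj_eq _ (admn n)).1.
  by apply: ereal_sup_ubound; exists (Tn n).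
have hfk : (\int[P]_x ((fdiv a (G x) - k0 x)%:E) <= S - \int[P]_x (k0 x)%:E)%E.
  rewrite mc; apply: lime_le; last exact: nearW.
  apply: ereal_nondecreasing_is_cvgn => n m nm.
  apply: ge0_le_integral.
  - exact: measurableT.
  - by move=> x _; rewrite lee_fin subr_ge0.
  - by apply/measurable_EFinP; apply: measurable_funB.
  - by apply/measurable_EFinP; apply: measurable_funB.
  - by move=> x _; exact: un_nd.
have k0fin : (\int[P]_x (k0 x)%:E)%E \is a fin_num.
  exact: (integrable_fin_num measurableT i0).
rewrite (splitL (fun x => fdiv a (G x)) k0 mfdiv i0 hk0).
by rewrite -leeBrDr.
Unshelve. all: by end_near.
Qed.

Lemma main_res : alpha_div a Q P =
    ereal_sup [set alpha_objective a Q P T | T in admissible a Q P]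
  /\
  (forall Tstar : d.-tuple R -> R,
     admissible a Q P Tstar ->
     {ae P, forall x, rn_deriv Q P x = (expR (- Tstar x))%:E} ->
     alpha_objective a Q P Tstar = alpha_div a Q P).
Proof. by split; [exact: part1|exact: part2]. Qed.

End main.

Theorem proposition1 (R : realType) (d : nat)
    (P Q : probability (d.-tuple R) R) (alpha : R) :
  P `<< Q -> Q `<< P ->
  alpha != 0 -> alpha != 1 ->
  alpha_div alpha Q P =
    ereal_sup [set alpha_objective alpha Q P T | T in admissible alpha Q P]
  /\
  (forall Tstar : d.-tuple R -> R,
     admissible alpha Q P Tstar ->
     {ae P, forall x, rn_deriv Q P x = (expR (- Tstar x))%:E} ->
     alpha_objective alpha Q P Tstar = alpha_div alpha Q P).
Proof. by move=> PQ QP a0 a1; exact: main_res. Qed.
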